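(* Let $n=2m$ and let $\Delta'$ be the simplicial complex on vertex set $\{(i,j):1\le i\le j\le n,\ i+j\ne n+1\}$ whose faces are the sets $F$ with $\prod_{(i,j)\in F}x_{ij}\notin K(2,n)$, with $K(2,n)$ as in the context. Order the facets of $\Delta'$ as follows: if $F$ is a facet of $\Delta_A$ and $G$ a facet of $\Delta_B$, then $F<G$ iff $A<B$ lexicographically, or $A=B$ and $F<G$ in the standard order of paths in $T_A$. Then this total order is a two-way shelling of $\Delta'$; precisely, for every facet $F$ of $\Delta'$, $$\langle F\rangle\cap\langle G:G<F\rangle=\langle F\setminus\{x\}:x\in F^-\rangle\quad\text{and}\quad\langle F\rangle\cap\langle G:G>F\rangle=\langle F\setminus\{x\}:x\in F^+\rangle.$$
   Context: $K(2,n)\subset K[x_{ij}:1\le i\le j\le n]$ is generated by the products $x_{ij}x_{hk}$ ($i\le j$, $h\le k$) not involving any $x_{a,n+1-a}$ and such that either $a+b=n+1$ for some $a\in\{i,j\}$, $b\in\{h,k\}$, or $i<h$ and $j<k$. $\langle F_1,\dots,F_k\rangle$ is the smallest simplicial complex containing $F_1,\dots,F_k$. $\mathcal A$ is the family of $m$-subsets $A\subseteq[n]$ with $i+j\ne n+1$ for all $i,j\in A$; for $A=\{a_1<\dots<a_m\}$, $T_A=\{(i,j):i\le j,\ i,j\in A\}$ and $\Delta_A=\{F\in\Delta':F\subseteq T_A\}$. It is a fact (established in the paper) that the facets of $\Delta_A$ are exactly the paths in $T_A$ starting at $(a_1,a_m)$ and ending at a diagonal position $(a_i,a_i)$, with steps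 horizontally left or vertically down, and each facet of $\Delta'$ is a facet of exactly one $\Delta_A$. Lexicographic order: $\{a_1<\dots<a_m\}<\{b_1<\dots<b_m\}$ iff $a_j<b_j$ for the smallest $j$ with $a_j\ne b_j$. Standard order of paths in $T_A$: $F<G$ iff at the first step (starting from $(a_1,a_m)$) where they differ, $F$'s step is horizontal and $G$'s is vertical. Types: an interior point of a path is a left turn if the step into it is horizontal and the step out vertical, a right turn if the step in is vertical and the step out horizontal; the last point (if the path has at least two points) is a left turn if the last step is horizontal, a right turn if vertical; all other points are isolated, each being the only point of the path with a certain $c\in A$ as row or column index ($c$ is its index). $F^-$ = right turns of $F$ together with isolated points of index $>m$; $F^+=F\setminus F^-$ = left turns together with isolated points of index $\le m$. *)

(* Defs.v *)
(* n = 2m throughout; indices 1..n live in 'I_n.+1 (0 unused). *)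
From mathcomp Require Import all_boot all_order.
Set Implicit Arguments.
Unset Strict Implicit.
Unset Printing Implicit Defensive.

Definition pt (m : nat) := ('I_(m.*2).+1 * 'I_(m.*2).+1)%type.

Definition var_pos (m : nat) (p : pt m) : bool := (1 <= p.1) && (p.1 <= p.2).

Definition antidiag (m : nat) (p : pt m) : bool := p.1 + p.2 == (m.*2).+1.

Definition vert (m : nat) (p : pt m) : bool := var_pos p && ~~ antidiag p.

Definition gen_pair (m : nat) (p q : pt m) : bool :=
  let: (i, j) := (val p.1, val p.2) in
  let: (h, k) := (val q.1, val q.2) in
  [&& var_pos p, var_pos q, ~~ antidiag p, ~~ antidiag q &
    [|| i + h == (m.*2).+1, i + k == (m.*2).+1, j + h == (m.*2).+1,
        j + k == (m.*2).+1 | (i < h) && (j < k)]].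

(* monomials as exponent vectors *)
Definition gen_mon (m : nat) (p q : pt m) : {ffun pt m -> nat} :=
  [ffun r => (r == p) + (r == q)].

Definition mdivides (m : nat) (f g : {ffun pt m -> nat}) : bool :=
  [forall r, f r <= g r].

(* a monomial lies in the monomial ideal K(2,n) iff some generator divides it *)
Definition inK (m : nat) (f : {ffun pt m -> nat}) : bool :=
  [exists p, exists q, gen_pair p q && mdivides (gen_mon p q) f].

Definition sqmon (m : nat) (F : {set pt m}) : {ffun pt m -> nat} :=
  [ffun r => nat_of_bool (r \in F)].

Definition face (m : nat) (F : {set pt m}) : bool :=
  (F \subset [set p | vert p]) && ~~ inK (sqmon F).

Definition facet (m : nat) (F : {set pt m}) : Prop :=
  face F /\ forall G : {set pt m}, face G -> F \subset G -> G = F.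

Definition inA (m : nat) (A : {set 'I_(m.*2).+1}) : bool :=
  [&& #|A| == m, [forall i in A, 1 <= i] &
      [forall i in A, forall j in A, i + j != (m.*2).+1]].

(* A = {a_1 < ... < a_m}; we use 0-based indices: aA A k = a_{k+1} *)
Definition sortA (m : nat) (A : {set 'I_(m.*2).+1}) : seq nat :=
  sort leq [seq val i | i <- enum A].
Definition aA (m : nat) (A : {set 'I_(m.*2).+1}) (k : nat) : nat :=
  nth 0 (sortA A) k.

Definition lexlt (m : nat) (A B : {set 'I_(m.*2).+1}) : Prop :=
  exists k, [/\ k < m, (forall l, l < k -> aA A l = aA B l) & aA A k < aA B k].

(* Paths in T_A: a word w of m-1 steps, true = horizontal (left, column index
   decreases), false = vertical (down, row index increases).  Point number k
   (0 <= k < m) has index position (r_k, s_k) with r_0 = 0, s_0 = m-1. *)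
Definition prow (w : seq bool) (k : nat) : nat := count negb (take k w).
Definition pcol (m : nat) (w : seq bool) (k : nat) : nat :=
  m.-1 - count id (take k w).

Definition rowi (m : nat) (A : {set 'I_(m.*2).+1}) w k := aA A (prow w k).
Definition coli (m : nat) (A : {set 'I_(m.*2).+1}) w k := aA A (pcol m w k).

Definition ptk (m : nat) (A : {set 'I_(m.*2).+1}) (w : seq bool) (k : nat)
  : pt m := (inord (rowi A w k), inord (coli A w k)).

Definition path_set (m : nat) (A : {set 'I_(m.*2).+1}) (w : seq bool)
  : {set pt m} := [set p | [exists k : 'I_m, p == ptk A w k]].

Definition stdlt (m : nat) (v w : seq bool) : Prop :=
  exists k, [/\ k < m.-1, take k v = take k w, nth false v k = true
              & nth false w k = false].

(* types of the points of a path (point k; step into it is w_(k-1),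
   step out of it is w_k) *)
Definition left_turn (m : nat) (w : seq bool) (k : nat) : bool :=
  [|| [&& 0 < k, k < m.-1, nth false w k.-1 & ~~ nth false w k]
    | [&& 2 <= m, k == m.-1 & nth false w k.-1]].
Definition right_turn (m : nat) (w : seq bool) (k : nat) : bool :=
  [|| [&& 0 < k, k < m.-1, ~~ nth false w k.-1 & nth false w k]
    | [&& 2 <= m, k == m.-1 & ~~ nth false w k.-1]].
Definition isolated (m : nat) (w : seq bool) (k : nat) : bool :=
  ~~ left_turn m w k && ~~ right_turn m w k.

Definition is_index (m : nat) (A : {set 'I_(m.*2).+1}) (w : seq bool)
    (k : nat) (c : nat) : bool :=
  ((rowi A w k == c) || (coli A w k == c)) &&
  [forall l : 'I_m, (val l != k) ==>
      ((rowi A w l != c) && (coli A w l != c))].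

Definition minus_set (m : nat) (A : {set 'I_(m.*2).+1}) (w : seq bool)
  : {set pt m} :=
  [set p | [exists k : 'I_m, (p == ptk A w k) &&
      (right_turn m w k ||
       (isolated m w k &&
        [exists c : 'I_(m.*2).+1, [&& c \in A, m < c & is_index A w k c]]))]].

Definition plus_set (m : nat) (A : {set 'I_(m.*2).+1}) (w : seq bool)
  : {set pt m} := path_set A w :\: minus_set A w.

Definition facet_lt (m : nat) (G F : {set pt m}) : Prop :=
  exists (B A : {set 'I_(m.*2).+1}) (v w : seq bool),
    [/\ inA B, inA A, size v = m.-1 & size w = m.-1] /\
    [/\ G = path_set B v, F = path_set A w, facet G, facet F &
        (lexlt B A \/ (B = A /\ stdlt m v w))].

(* Main.v *)
Require Import Defs.
From mathcomp Require Import all_boot all_order zify.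
Set Implicit Arguments.
Unset Strict Implicit.
Unset Printing Implicit Defensive.

Definition hc (w : seq bool) k := count id (take k w).

Lemma take_step (w : seq bool) k : k < size w ->
  take k.+1 w = rcons (take k w) (nth false w k).
Proof. by move=> h; rewrite (take_nth false h). Qed.

Lemma hc_step w k : k < size w -> hc w k.+1 = hc w k + nth false w k.
Proof. by move=> h; rewrite /hc take_step // -cats1 count_cat /= addn0. Qed.

Lemma prow_step w k : k < size w -> prow w k.+1 = prow w k + ~~ nth false w k.
Proof. by move=> h; rewrite /prow take_step // -cats1 count_cat /= addn0. Qed.

Lemma prow_hc w k : k <= size w -> prow w k + hc w k = k.
Proof.
move=> h; rewrite /prow /hc addnC.
have := count_predC id (take k w). rewrite size_takel //.
Qed.

Lemma hc_mono w k l : k <= l -> hc w k <= hc w l.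
Proof.
move=> kl; rewrite /hc -(subnKC kl) takeD count_cat; lia.
Qed.

Lemma prow_mono w k l : k <= l -> prow w k <= prow w l.
Proof.
move=> kl; rewrite /prow -(subnKC kl) takeD count_cat; lia.
Qed.

Lemma pcol_mono m w k l : k <= l -> pcol m w l <= pcol m w k.
Proof. move=> kl; rewrite /pcol; have := hc_mono w kl; rewrite /hc; lia. Qed.

Section W.
Variable m : nat.
Variable w : seq bool.
Hypothesis hw : size w = m.-1.
Hypothesis hm : 0 < m.

Lemma pcolE k : k < m -> pcol m w k = m.-1 - k + prow w k.
Proof.
move=> km; have := prow_hc (w:=w) (k:=k); rewrite hw /pcol -/(hc w k).
move=> /(_ ltac:(lia)); lia.
Qed.

Lemma prow_le k : k < m -> prow w k <= pcol m w k.
Proof. move=> km; rewrite pcolE //; lia. Qed.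

Lemma pcol_lt k : k < m -> pcol m w k < m.
Proof. rewrite /pcol; lia. Qed.

Lemma stepH k : k < m.-1 -> nth false w k = true ->
  prow w k.+1 = prow w k /\ pcol m w k.+1 = (pcol m w k).-1.
Proof.
move=> km hk; have h : k < size w by rewrite hw.
rewrite prow_step // hk; split; first by rewrite addn0.
have := hc_step h; rewrite hk /pcol -!/(hc w _).
have := prow_hc (w:=w) (k:=k.+1); rewrite hw => /(_ ltac:(lia)).
have := prow_hc (w:=w) (k:=k); rewrite hw => /(_ ltac:(lia)). lia.
Qed.

Lemma stepV k : k < m.-1 -> nth false w k = false ->
  prow w k.+1 = (prow w k).+1 /\ pcol m w k.+1 = pcol m w k.
Proof.
move=> km hk; have h : k < size w by rewrite hw.
rewrite prow_step // hk; split; first by rewrite addn1.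
have := hc_step h; rewrite hk /pcol -!/(hc w _). lia.
Qed.

Lemma pos_inj k l : k < m -> l < m -> prow w k = prow w l ->
  pcol m w k = pcol m w l -> k = l.
Proof. move=> km lm; rewrite !pcolE //; lia. Qed.

Lemma prow0 : prow w 0 = 0.
Proof. by rewrite /prow take0. Qed.
Lemma pcol0 : pcol m w 0 = m.-1.
Proof. by rewrite /pcol take0 /= subn0. Qed.
Lemma last_diag : prow w m.-1 = pcol m w m.-1.
Proof.
case: (posnP m) => [m0|mpos].
  by rewrite m0 /pcol /prow /= take0.
rewrite pcolE; lia.
Qed.

Lemma ivt_row t : t <= prow w m.-1 -> exists k, k < m /\ prow w k = t.
Proof.
move=> ht.
suff: forall N, N <= m.-1 -> t <= prow w N -> exists k, k <= N /\ prow w k = t.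
  move=> /(_ m.-1 (leqnn _) ht) [k [kN hk]]; exists k; split=> //.
  lia.
elim=> [|N IH] hN htN.
  by exists 0; split=> //; move: htN; rewrite prow0; lia.
case: (leqP t (prow w N)) => h.
  by have [k [kN hk]] := IH ltac:(lia) h; exists k; split=> //; lia.
exists N.+1; split=> //.
move: htN; rewrite prow_step ?hw; last lia.
case: (nth false w N) => /=; lia.
Qed.

Lemma ivt_col t : pcol m w m.-1 <= t -> t < m -> exists k, k < m /\ pcol m w k = t.
Proof.
move=> ht tm.
suff: forall N, N <= m.-1 -> pcol m w N <= t -> exists k, k <= N /\ pcol m w k = t.
  move=> /(_ m.-1 (leqnn _) ht) [k [kN hk]]; exists k; split=> //. lia.
elim=> [|N IH] hN htN.
  by exists 0; split=> //; move: htN; rewrite pcol0; lia.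
case: (leqP (pcol m w N) t) => h.
  by have [k [kN hk]] := IH ltac:(lia) h; exists k; split=> //; lia.
exists N.+1; split=> //.
case hn: (nth false w N).
  by have [_ e] := stepH (k:=N) ltac:(lia) hn; lia.
by have [_ e] := stepV (k:=N) ltac:(lia) hn; lia.
Qed.

Lemma cover_pos t : t < m -> exists k, k < m /\ (prow w k = t \/ pcol m w k = t).
Proof.
move=> tm; case: (leqP t (prow w m.-1)) => h.
  by have [k [km hk]] := ivt_row h; exists k; split=> //; left.
have [k [km hk]] := ivt_col (t:=t) ltac:(rewrite -last_diag; lia) tm.
by exists k; split=> //; right.
Qed.

End W.

Section S.
Variable m : nat.
Variable A : {set 'I_(m.*2).+1}.
Hypothesis hA : inA A.

Lemma inA_card : #|A| = m.
Proof. by case/and3P: hA => /eqP. Qed.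
Lemma inA_pos c : c \in A -> 0 < c.
Proof. by case/and3P: hA => _ /forallP /(_ c) /implyP h _ /h. Qed.
Lemma inA_nc a b : a \in A -> b \in A -> a + b != (m.*2).+1.
Proof.
case/and3P: hA => _ _ /forallP h ha hb.
by move: (h a); rewrite ha /= => /forallP /(_ b); rewrite hb.
Qed.

Lemma sizeA : size (sortA A) = m.
Proof. by rewrite /sortA size_sort size_map -cardE inA_card. Qed.

Lemma memA x : (x \in sortA A) = (x \in [seq val i | i <- enum A]).
Proof. by rewrite /sortA mem_sort. Qed.

Lemma sortedA : sorted ltn (sortA A).
Proof.
rewrite ltn_sorted_uniq_leq sort_uniq sort_sorted ?andbT; last exact: leq_total.
rewrite map_inj_uniq ?enum_uniq //; exact: val_inj.
Qed.

Lemma aA_lt i j : i < j -> j < m -> aA A i < aA A j.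
Proof.
move=> ij jm; rewrite /aA.
apply: (sorted_ltn_nth ltn_trans 0 sortedA); rewrite ?inE ?sizeA //; lia.
Qed.

Lemma aA_le i j : i <= j -> j < m -> aA A i <= aA A j.
Proof.
rewrite leq_eqVlt => /orP [/eqP -> //|ij jm]; exact/ltnW/aA_lt.
Qed.

Lemma aA_ltE i j : i < m -> j < m -> (aA A i < aA A j) = (i < j).
Proof.
move=> im jm; apply/idP/idP; last by move/aA_lt; apply.
case: (ltnP i j) => // ji; have := aA_le ji im; lia.
Qed.

Lemma aA_leE i j : i < m -> j < m -> (aA A i <= aA A j) = (i <= j).
Proof. by move=> im jm; rewrite leqNgt aA_ltE // -leqNgt. Qed.

Lemma aA_inj i j : i < m -> j < m -> aA A i = aA A j -> i = j.
Proof.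
move=> im jm e; apply/eqP; rewrite eqn_leq -(aA_leE im jm) -(aA_leE jm im) e leqnn //.
Qed.

Lemma aA_in i : i < m -> exists2 c, c \in A & val c = aA A i.
Proof.
move=> im; have : aA A i \in sortA A by rewrite /aA mem_nth // sizeA.
by rewrite memA => /mapP [c]; rewrite mem_enum => cA ->; exists c.
Qed.

Lemma aA_pos i : i < m -> 0 < aA A i.
Proof. by move=> /aA_in [c /inA_pos h <-]. Qed.
Lemma aA_le2m i : i < m -> aA A i <= m.*2.
Proof. by move=> /aA_in [c _ <-]; rewrite -ltnS ltn_ord. Qed.

Lemma idxA (c : 'I_(m.*2).+1) : c \in A ->
  exists2 t, t < m & aA A t = c.
Proof.
move=> cA; have cs : val c \in sortA A by rewrite memA map_f // mem_enum.
exists (index (val c) (sortA A)); first by rewrite -[X in _ < X]sizeA index_mem.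
by rewrite /aA nth_index.
Qed.

Lemma idxA_nat (c : nat) : (exists2 d, d \in A & val d = c) ->
  exists2 t, t < m & aA A t = c.
Proof. by case=> d /idxA [t tm e] <-; exists t. Qed.

Lemma complA (c : 'I_(m.*2).+1) : 0 < c -> c \notin A ->
  exists2 b, b \in A & b + c = (m.*2).+1.
Proof.
move=> c0 cA.
pose f (x : 'I_(m.*2).+1) : 'I_(m.*2).+1 := inord ((m.*2).+1 - x).
pose D := [set x : 'I_(m.*2).+1 | 0 < x].
have fV (x : 'I_(m.*2).+1) : 0 < x -> val (f x) = (m.*2).+1 - x.
  move=> x0; rewrite /f /= inordK //; have := ltn_ord x; lia.
have injf : {in A &, injective f}.
  move=> x y xA yA e; apply: val_inj; have := congr1 val e.
  rewrite !fV ?inA_pos // /=; have := ltn_ord x; have := ltn_ord y; lia.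
have cardS : #|f @: A| = m by rewrite card_in_imset // inA_card.
have dis : [disjoint A & f @: A].
  apply/pred0P => x /=; apply/negbTE/negP => /andP [xA /imsetP [y yA ey]].
  have := inA_nc xA yA; rewrite ey fV ?inA_pos //; have := ltn_ord y; lia.
have cardD : #|D| = m.*2.
  have -> : D = [set~ ord0].
    by apply/setP => x; rewrite !inE -val_eqE /= lt0n.
  by rewrite cardsC1 card_ord.
have sub : A :|: f @: A \subset D.
  apply/subsetP => x; rewrite !inE => /orP [/inA_pos //|/imsetP [y yA ->]].
  rewrite fV ?inA_pos //; have := ltn_ord y; lia.
have eqD : A :|: f @: A = D.
  apply/eqP; rewrite eqEcard sub cardsU /=.
  have -> : #|A :&: f @: A| = 0.
    by rewrite (disjoint_setI0 dis) cards0.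
  rewrite cardD cardS inA_card; lia.
have : c \in D by rewrite inE.
rewrite -eqD inE (negbTE cA) /= => /imsetP [b bA ->].
exists b => //; rewrite fV ?inA_pos //; have := ltn_ord b; lia.
Qed.

End S.

Definition chainS m (S : {set pt m}) :=
  forall p q, p \in S -> q \in S -> ~~ ((val p.1 < val q.1) && (val p.2 < val q.2)).

Lemma pt_eq m (p q : pt m) : val p.1 = val q.1 -> val p.2 = val q.2 -> p = q.
Proof. by case: p q => [p1 p2] [q1 q2] /= /val_inj -> /val_inj ->. Qed.

Lemma inK_E m (S : {set pt m}) : inK (sqmon S) ->
  exists p q, [/\ p \in S, q \in S, p != q & gen_pair p q].
Proof.
case/existsP => p /existsP [q /andP [g /forallP d]].
have dp := d p; have dq := d q; rewrite !ffunE !eqxx /= in dp dq.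
case: (eqVneq p q) => [e|ne].
  by move: dp; rewrite e eqxx; case: (q \in S).
exists p, q; split=> //.
  by move: dp; rewrite (negbTE ne); case: (p \in S).
by move: dq; rewrite eq_sym (negbTE ne); case: (q \in S).
Qed.

Lemma inK_I m (S : {set pt m}) p q : p \in S -> q \in S -> p != q ->
  gen_pair p q -> inK (sqmon S).
Proof.
move=> pS qS ne g; apply/existsP; exists p; apply/existsP; exists q.
rewrite g /=; apply/forallP => r; rewrite !ffunE.
case: (eqVneq r p) => [->|rp]; first by rewrite (negbTE ne) pS.
by case: (eqVneq r q) => [->|//]; rewrite qS.
Qed.

Lemma gen_pairI m (p q : pt m) : vert p -> vert q ->
  [|| val p.1 + val q.1 == (m.*2).+1, val p.1 + val q.2 == (m.*2).+1,
      val p.2 + val q.1 == (m.*2).+1, val p.2 + val q.2 == (m.*2).+1 |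
      (val p.1 < val q.1) && (val p.2 < val q.2)] -> gen_pair p q.
Proof.
case: p q => [p1 p2] [q1 q2]; rewrite /vert /gen_pair /= => /andP [-> ->] /andP [-> ->].
done.
Qed.

Lemma gen_pairE m (p q : pt m) : gen_pair p q ->
  [|| val p.1 + val q.1 == (m.*2).+1, val p.1 + val q.2 == (m.*2).+1,
      val p.2 + val q.1 == (m.*2).+1, val p.2 + val q.2 == (m.*2).+1 |
      (val p.1 < val q.1) && (val p.2 < val q.2)].
Proof. by case: p q => [p1 p2] [q1 q2]; rewrite /gen_pair /= => /and5P [_ _ _ _]. Qed.

Lemma face_vert m (S : {set pt m}) p : face S -> p \in S -> vert p.
Proof. by case/andP => /subsetP h _ /h; rewrite inE. Qed.

Section PS.
Set Default Proof Using "All".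
Variable m : nat.
Hypothesis hm : 0 < m.
Variable A : {set 'I_(m.*2).+1}.
Hypothesis hA : inA A.
Variable w : seq bool.
Hypothesis hw : size w = m.-1.

Lemma prow_lt k : k < m -> prow w k < m.
Proof. move=> km; have := prow_le hw hm km; have := pcol_lt hw hm km; lia. Qed.

Lemma ptk1 k : k < m -> val (ptk A w k).1 = aA A (prow w k).
Proof. by move=> km; rewrite /= inordK // ltnS aA_le2m // prow_lt. Qed.
Lemma ptk2 k : k < m -> val (ptk A w k).2 = aA A (pcol m w k).
Proof. by move=> km; rewrite /= inordK // ltnS aA_le2m // pcol_lt. Qed.

Lemma ptk_inj k l : k < m -> l < m -> ptk A w k = ptk A w l -> k = l.
Proof.
move=> km lm e.
have e1 := congr1 (fun p => val p.1) e; have e2 := congr1 (fun p => val p.2) e.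
rewrite /= !ptk1 // in e1; rewrite /= !ptk2 // in e2.
apply: (pos_inj hw hm) => //.
  exact: (aA_inj hA (prow_lt km) (prow_lt lm)).
exact: (aA_inj hA (pcol_lt hw hm km) (pcol_lt hw hm lm)).
Qed.

Lemma in_path p : (p \in path_set A w) <-> exists2 k, k < m & p = ptk A w k.
Proof.
rewrite inE; split.
  by case/existsP => k /eqP ->; exists k.
by case=> k km ->; apply/existsP; exists (Ordinal km).
Qed.

Lemma ptk_in k : k < m -> ptk A w k \in path_set A w.
Proof. by move=> km; apply/in_path; exists k. Qed.

Lemma ptk_le k : k < m -> val (ptk A w k).1 <= val (ptk A w k).2.
Proof. move=> km; rewrite ptk1 ?ptk2 //; apply: aA_le => //; [exact: (prow_le hw hm) | exact: (pcol_lt hw hm)]. Qed.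

Lemma ptkA1 k : k < m -> (ptk A w k).1 \in A.
Proof.
move=> km; have [c cA e] := aA_in hA (prow_lt km).
by have -> : (ptk A w k).1 = c by apply: val_inj; rewrite ptk1.
Qed.
Lemma ptkA2 k : k < m -> (ptk A w k).2 \in A.
Proof.
move=> km; have [c cA e] := aA_in hA (pcol_lt hw hm km).
by have -> : (ptk A w k).2 = c by apply: val_inj; rewrite ptk2.
Qed.

Lemma ptk_chain k l : k < m -> l < m ->
  ~~ ((val (ptk A w k).1 < val (ptk A w l).1) && (val (ptk A w k).2 < val (ptk A w l).2)).
Proof.
move=> km lm; rewrite !ptk1 ?ptk2 // !aA_ltE ?prow_lt ?pcol_lt //.
apply/negP => /andP [h1 h2].
case: (leqP k l) => kl.
  by have := pcol_mono m w kl; lia.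
by have := prow_mono w (ltnW kl); lia.
Qed.

Lemma path_chain : chainS (path_set A w).
Proof. by move=> p q /in_path [k km ->] /in_path [l lm ->]; exact: ptk_chain. Qed.

Lemma ptk_vert k : k < m -> vert (ptk A w k).
Proof.
move=> km; rewrite /vert /var_pos ptk_le // andbT /antidiag.
rewrite ptk1 // aA_pos ?prow_lt //=.
have := inA_nc hA (ptkA1 km) (ptkA2 km). by rewrite ptk1 // ptk2.
Qed.

Lemma face_path : face (path_set A w).
Proof.
apply/andP; split.
  by apply/subsetP => p /in_path [k km ->]; rewrite inE ptk_vert.
apply/negP => /inK_E [p [q [/in_path [k km ->] /in_path [l lm ->] ne /gen_pairE g]]].
have n11 := inA_nc hA (ptkA1 km) (ptkA1 lm).
have n12 := inA_nc hA (ptkA1 km) (ptkA2 lm).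
have n21 := inA_nc hA (ptkA2 km) (ptkA1 lm).
have n22 := inA_nc hA (ptkA2 km) (ptkA2 lm).
move: g; rewrite (negbTE n11) (negbTE n12) (negbTE n21) (negbTE n22) /= => g.
by have := ptk_chain km lm; rewrite g.
Qed.

Lemma facet_path : facet (path_set A w).
Proof.
split; first exact: face_path.
move=> G fG sub; apply/eqP; rewrite eqEsubset sub andbT.
apply/subsetP => y yG; apply/negPn/negP => ny.
have vy := face_vert fG yG.
have kill : forall q, q \in path_set A w -> gen_pair y q \/ gen_pair q y -> False.
  move=> q qP [] g; case/andP: fG => _ /negP; apply.
    apply: (inK_I yG (subsetP sub _ qP)) g.
    by apply/negP => /eqP e; move: ny; rewrite e qP.
  apply: (inK_I (subsetP sub _ qP) yG) g.
  by apply/negP => /eqP e; move: ny; rewrite -e qP.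
move: (vy); rewrite /vert /var_pos /antidiag => /andP [/andP [y1 y12] nad].
have compl : forall c : 'I_(m.*2).+1, 0 < c -> c \notin A ->
   (c = y.1 \/ c = y.2) -> False.
  move=> c c0 cA ec.
  have [b bA eb] := complA hA c0 cA.
  have [t tm et] := idxA hA bA.
  have [k [km hk]] := cover_pos hw hm tm.
  apply: (kill _ (ptk_in km)); left; apply: gen_pairI => //; first exact: ptk_vert.
  case: hk => hk.
    have e1 : val (ptk A w k).1 = val b by rewrite ptk1 // hk et.
    by case: ec => <-; rewrite e1 (addnC c b) eb eqxx ?orbT.
  have e1 : val (ptk A w k).2 = val b by rewrite ptk2 // hk et.
  by case: ec => <-; rewrite e1 (addnC c b) eb eqxx ?orbT.
case: (boolP (y.1 \in A)) => [y1A|]; last by move=> h; apply: (compl _ y1 h); left.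
case: (boolP (y.2 \in A)) => [y2A|]; last by move=> h; apply: (compl _ (leq_trans y1 y12) h); right.
have [t1 t1m e1] := idxA hA y1A; have [t2 t2m e2] := idxA hA y2A.
have t12 : t1 <= t2 by rewrite -(aA_leE hA t1m t2m) e1 e2.
pose k := m.-1 - (t2 - t1).
have km : k < m by rewrite /k; lia.
have pc := pcolE hw hm km.
have pr := pcol_lt hw hm km.
have [/eqP er|ne] := boolP (prow w k == t1).
  move: ny; rewrite (_ : y = ptk A w k) ?ptk_in //.
  apply: pt_eq => /=; first by rewrite ptk1 // er e1.
  rewrite ptk2 // -e2; congr (aA A _); rewrite pc er /k; lia.
apply: (kill _ (ptk_in km)).
have := ptk_vert km => vq.
case: (ltnP (prow w k) t1) => h.
  right; apply: gen_pairI => //; do 4 (apply/orP; right).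
  rewrite /= ptk1 ?ptk2 // -e1 -e2 !aA_ltE //; try lia; rewrite /k; lia.
left; apply: gen_pairI => //; do 4 (apply/orP; right).
rewrite /= ptk1 ?ptk2 // -e1 -e2 !aA_ltE //; try lia; rewrite ?prow_lt // /k; lia.
Qed.

End PS.

Lemma greedy_gen N : forall r s (C : seq (nat * nat)), r + N = s ->
  (forall a b, (a, b) \in C -> [&& r <= a, a <= b & b <= s]) ->
  (forall a b c d, (a, b) \in C -> (c, d) \in C -> ~~ ((a < c) && (b < d))) ->
  exists u : seq bool, size u = N /\ forall a b, (a, b) \in C ->
    exists2 k, k <= N & (r + count negb (take k u) = a /\ s - count id (take k u) = b).
Proof.
elim: N => [|N IH] r s C hrs hC ch.
  exists [::]; split=> // a b pC; exists 0 => //=.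
  have /and3P [h1 h2 h3] := hC a b pC; rewrite addn0 in hrs; subst s; split; lia.
pose C' := [seq p <- C | p != (r, s)].
have hC' : forall p, p \in C' -> p \in C by move=> p; rewrite mem_filter => /andP [].
have ch' : forall a b c d, (a, b) \in C' -> (c, d) \in C' -> ~~ ((a < c) && (b < d)).
  by move=> a b c d /hC' pC /hC' qC; apply: ch.
case hb: (has (fun p => (p.1 == r) && (p.2 < s)) C).
  have hC2 : forall a b, (a, b) \in C' -> [&& r <= a, a <= b & b <= s.-1].
    move=> a b pC'; have := hC a b (hC' _ pC'); move: pC'; rewrite mem_filter => /andP [ne pC].
    move/and3P => [h1 h2 h3]; apply/and3P; split=> //.
    case: (ltnP b s) => h4; first lia.
    have e2 : b = s by lia.
    case: (ltnP r a) => h5.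
      move/hasP: hb => [[c d] qC /andP [/eqP /= q1 q2]].
      by have := ch c d a b qC pC; rewrite q1 h5 e2 q2.
    by move: ne; rewrite e2 (_ : a = r) ?eqxx //; lia.
  have [u [su hu]] := IH r s.-1 C' ltac:(lia) hC2 ch'.
  exists (true :: u); split; first by rewrite /= su.
  move=> a b pC; case: (eqVneq (a, b) (r, s)) => [[-> ->]|ne].
    by exists 0 => //=; rewrite addn0 subn0.
  have [k kN [e1 e2]] := hu a b ltac:(by rewrite mem_filter ne pC).
  exists k.+1; first lia.
  by rewrite /= e1; split=> //; rewrite -e2; lia.
have hC2 : forall a b, (a, b) \in C' -> [&& r.+1 <= a, a <= b & b <= s].
  move=> a b pC'; have := hC a b (hC' _ pC'); move: pC'; rewrite mem_filter => /andP [ne pC].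
  move/and3P => [h1 h2 h3]; apply/and3P; split=> //.
  case: (ltnP r a) => h5 //.
  have e1 : a = r by lia.
  case: (ltnP b s) => h4.
    by exfalso; move/negbT/negP: hb; apply; apply/hasP; exists (a, b) => //; rewrite /= e1 eqxx h4.
  by move: ne; rewrite e1 (_ : b = s) ?eqxx //; lia.
have [u [su hu]] := IH r.+1 s C' ltac:(lia) hC2 ch'.
exists (false :: u); split; first by rewrite /= su.
move=> a b pC; case: (eqVneq (a, b) (r, s)) => [[-> ->]|ne].
  by exists 0 => //=; rewrite addn0 subn0.
have [k kN [e1 e2]] := hu a b ltac:(by rewrite mem_filter ne pC).
exists k.+1; first lia.
by rewrite /= -e1 -e2; split=> //; lia.
Qed.

Lemma greedy m (C : seq (nat * nat)) : 0 < m ->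
  (forall p, p \in C -> p.1 <= p.2 < m) ->
  (forall p q, p \in C -> q \in C -> ~~ ((p.1 < q.1) && (p.2 < q.2))) ->
  exists v, size v = m.-1 /\ forall p, p \in C ->
    exists2 k, k < m & (prow v k = p.1 /\ pcol m v k = p.2).
Proof.
move=> hm hC ch.
have hC2 : forall a b, (a, b) \in C -> [&& 0 <= a, a <= b & b <= m.-1].
  move=> a b /hC /= /andP [h1 h2]; rewrite h1 /=; lia.
have [u [su hu]] := @greedy_gen m.-1 0 m.-1 C (add0n _) hC2 (fun a b c d => ch (a, b) (c, d)).
exists u; split=> // [[a b]] /hu [k kN [e1 e2]]; exists k; first lia.
by rewrite /prow /pcol -e1 -e2.
Qed.

Lemma idx_spec m (B : {set 'I_(m.*2).+1}) (c : 'I_(m.*2).+1) : inA B -> c \in B ->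
  index (val c) (sortA B) < m /\ aA B (index (val c) (sortA B)) = c.
Proof.
move=> hB cB; have cs : val c \in sortA B by rewrite memA map_f // mem_enum.
by rewrite -[X in _ < X](sizeA hB) index_mem /aA nth_index.
Qed.

Lemma build m (hm : 0 < m) (B : {set 'I_(m.*2).+1}) (hB : inA B) (T : {set pt m}) :
  (forall p, p \in T -> [/\ p.1 \in B, p.2 \in B & val p.1 <= val p.2]) -> chainS T ->
  exists v, size v = m.-1 /\ T \subset path_set B v.
Proof.
move=> hT ch.
pose pos (p : pt m) := (index (val p.1) (sortA B), index (val p.2) (sortA B)).
pose C := [seq pos p | p <- enum T].
have posP : forall p, p \in T -> [/\ (pos p).1 < m, (pos p).2 < m,
    aA B (pos p).1 = p.1 & aA B (pos p).2 = p.2].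
  move=> p pT; have [h1 h2 h3] := hT p pT.
  by have [? ?] := idx_spec hB h1; have [? ?] := idx_spec hB h2.
have h1 : forall p, p \in C -> p.1 <= p.2 < m.
  move=> x /mapP [p]; rewrite mem_enum => pT ->.
  have [a1 a2 e1 e2] := posP p pT; have [_ _ h3] := hT p pT.
  by rewrite a2 andbT -(aA_leE hB a1 a2) e1 e2.
have h2 : forall p q, p \in C -> q \in C -> ~~ ((p.1 < q.1) && (p.2 < q.2)).
  move=> x y /mapP [p]; rewrite mem_enum => pT -> /mapP [q]; rewrite mem_enum => qT ->.
  have [a1 a2 e1 e2] := posP p pT; have [b1 b2 f1 f2] := posP q qT.
  by rewrite -(aA_ltE hB a1 b1) -(aA_ltE hB a2 b2) e1 e2 f1 f2; apply: ch.
have [v [sv hv]] := @greedy m C hm h1 h2.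
exists v; split=> //; apply/subsetP => p pT.
have pC : pos p \in C by apply: map_f; rewrite mem_enum.
have [k km [e1 e2]] := hv (pos p) pC.
have [a1 a2 f1 f2] := posP p pT.
apply/(in_path hm hB sv); exists k => //.
apply: pt_eq => /=.
  by rewrite (ptk1 hm hB sv km) e1 f1.
by rewrite (ptk2 hm hB sv km) e2 f2.
Qed.

Section P5.
Set Default Proof Using "All".
Variable m : nat.
Hypothesis hm : 0 < m.
Variable A : {set 'I_(m.*2).+1}.
Hypothesis hA : inA A.
Variable w : seq bool.
Hypothesis hw : size w = m.-1.

Local Notation nw k := (nth false w k).

Lemma runV k d : k + d <= m.-1 -> (forall i, k <= i -> i < k + d -> nw i = false) ->
  prow w (k + d) = prow w k + d /\ pcol m w (k + d) = pcol m w k.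
Proof.
elim: d => [|d IH] h1 h2; first by rewrite !addn0.
have [e1 e2] := IH ltac:(lia) (fun i a b => h2 i a ltac:(lia)).
have [s1 s2] := stepV hw hm (k := k + d) ltac:(lia) (h2 (k + d) ltac:(lia) ltac:(lia)).
rewrite addnS s1 s2 e1 e2; split; lia.
Qed.

Lemma runH k d : k + d <= m.-1 -> (forall i, k <= i -> i < k + d -> nw i = true) ->
  prow w (k + d) = prow w k /\ pcol m w (k + d) = pcol m w k - d.
Proof.
elim: d => [|d IH] h1 h2; first by rewrite !addn0 subn0.
have [e1 e2] := IH ltac:(lia) (fun i a b => h2 i a ltac:(lia)).
have [s1 s2] := stepH hw hm (k := k + d) ltac:(lia) (h2 (k + d) ltac:(lia) ltac:(lia)).
rewrite addnS s1 s2 e1 e2; split=> //; lia.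
Qed.

Lemma pcol_pos k : k < m.-1 -> 0 < pcol m w k.
Proof. move=> km; rewrite (pcolE hw hm (k:=k)); lia. Qed.

Lemma turn_int k : 0 < k -> k < m.-1 ->
  left_turn m w k = nw k.-1 && ~~ nw k /\ right_turn m w k = ~~ nw k.-1 && nw k.
Proof.
move=> k0 km; have e : (k == m.-1) = false by apply/eqP; lia.
by rewrite /left_turn /right_turn k0 km e !andbF !orbF.
Qed.

Lemma turn_last : 1 < m ->
  left_turn m w m.-1 = nw m.-1.-1 /\ right_turn m w m.-1 = ~~ nw m.-1.-1.
Proof.
move=> m1; have e : (m.-1 < m.-1) = false by rewrite ltnn.
by rewrite /left_turn /right_turn e m1 eqxx !andbF.
Qed.

Lemma turn0 : left_turn m w 0 = false /\ right_turn m w 0 = false.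
Proof.
rewrite /left_turn /right_turn /=.
case: (boolP (2 <= m)) => //= m2; have e : (0 == m.-1) = false by apply/eqP; lia.
by rewrite e.
Qed.

Lemma iso0 : isolated m w 0.
Proof. by rewrite /isolated; have [-> ->] := turn0. Qed.

Lemma aA_neq i j : i < m -> j < m -> i != j -> aA A i != aA A j.
Proof. by move=> im jm ij; apply/negP => /eqP /(aA_inj hA im jm) /eqP; apply/negP. Qed.

Lemma isidx_coord k c : is_index A w k c -> rowi A w k = c \/ coli A w k = c.
Proof. by case/andP => /orP [] /eqP; [left|right]. Qed.

Lemma isidx_row k l c : is_index A w k c -> l < m -> l != k ->
  prow w l = prow w k -> coli A w k = c.
Proof.
case/andP => h /forallP /(_ (Ordinal (_ : l < m))) hl lm lk e.
move: (hl lm); rewrite /= lk /= => /andP [h1 _].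
move: h1; rewrite /rowi e => h1.
by case/orP: h => /eqP // e2; move: h1; rewrite -e2 /rowi eqxx.
Qed.

Lemma isidx_col k l c : is_index A w k c -> l < m -> l != k ->
  pcol m w l = pcol m w k -> rowi A w k = c.
Proof.
case/andP => h /forallP /(_ (Ordinal (_ : l < m))) hl lm lk e.
move: (hl lm); rewrite /= lk /= => /andP [_ h1].
move: h1; rewrite /coli e => h1.
by case/orP: h => /eqP // e2; move: h1; rewrite -e2 /coli eqxx.
Qed.

Lemma U_col k : k < m.-1 -> nw k = true -> (k = 0 \/ nw k.-1 = true) ->
  is_index A w k (aA A (pcol m w k)).
Proof.
move=> km hk hp; apply/andP; split; first by rewrite /coli eqxx orbT.
apply/forallP => l; apply/implyP => lk0; have lk : nat_of_ord l != k := lk0.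
have lm := ltn_ord l.
have [s1 s2] := stepH hw hm km hk.
have pl := pcol_pos km.
have ld := last_diag hw hm.
have r1 : prow w l != pcol m w k.
  have h1 := @prow_mono w l m.-1 ltac:(lia); have h2 := @pcol_mono m w k.+1 m.-1 ltac:(lia).
  apply/eqP; lia.
have r2 : pcol m w l != pcol m w k.
  case: (ltnP l k) => lk'.
    case: hp => [k0|hp]; first lia.
    have [t1 t2] := stepH hw hm (k := k.-1) ltac:(lia) hp.
    rewrite (_ : k.-1.+1 = k) in t1 t2; last lia.
    have h := @pcol_mono m w (l) (k.-1) ltac:(lia); apply/eqP; lia.
  have h := @pcol_mono m w k.+1 l ltac:(lia).
  apply/eqP; lia.
have a1 := prow_lt hm hA hw lm; have a2 := pcol_lt hw hm lm; have a3 := pcol_lt hw hm (_ : k < m).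
rewrite /rowi /coli; apply/andP; split; apply: aA_neq => //; apply: a3; lia.
Qed.

Lemma U_row k : k < m.-1 -> nw k = false -> (k = 0 \/ nw k.-1 = false) ->
  is_index A w k (aA A (prow w k)).
Proof.
move=> km hk hp; apply/andP; split; first by rewrite /rowi eqxx.
apply/forallP => l; apply/implyP => lk0; have lk : nat_of_ord l != k := lk0.
have lm := ltn_ord l.
have [s1 s2] := stepV hw hm km hk.
have ld := last_diag hw hm.
have r1 : prow w l != prow w k.
  case: (ltnP l k) => lk'.
    case: hp => [k0|hp]; first lia.
    have [t1 t2] := stepV hw hm (k := k.-1) ltac:(lia) hp.
    rewrite (_ : k.-1.+1 = k) in t1 t2; last lia.
    have h := @prow_mono w (l) (k.-1) ltac:(lia); apply/eqP; lia.
  have h := @prow_mono w k.+1 l ltac:(lia).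
  apply/eqP; lia.
have r2 : pcol m w l != prow w k.
  have h1 := @prow_mono w k.+1 m.-1 ltac:(lia).
  have h2 := @pcol_mono m w l m.-1 ltac:(lia).
  apply/eqP; lia.
have a1 := prow_lt hm hA hw lm; have a2 := pcol_lt hw hm lm; have a3 := prow_lt hm hA hw (_ : k < m).
rewrite /rowi /coli; apply/andP; split; apply: aA_neq => //; apply: a3; lia.
Qed.

Lemma U_m1 : m = 1 -> is_index A w 0 (aA A (prow w 0)).
Proof.
move=> m1; apply/andP; split; first by rewrite /rowi eqxx.
apply/forallP => l; apply/implyP => lk0; have lk : nat_of_ord l != 0 := lk0; have := ltn_ord l; lia.
Qed.

Definition mcond k := right_turn m w k ||
  (isolated m w k && [exists c : 'I_(m.*2).+1, [&& c \in A, m < c & is_index A w k c]]).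

Lemma minusI k : k < m -> mcond k -> ptk A w k \in minus_set A w.
Proof. by move=> km h; rewrite inE; apply/existsP; exists (Ordinal km); rewrite eqxx. Qed.

Lemma minusE k : k < m -> ptk A w k \in minus_set A w -> mcond k.
Proof.
move=> km; rewrite inE => /existsP [l /andP [/eqP e h]].
by have := ptk_inj hm hA hw km (ltn_ord l) e => ->.
Qed.

Lemma plusI k : k < m -> ~~ mcond k -> ptk A w k \in plus_set A w.
Proof.
move=> km h; rewrite inE ptk_in // andbT.
by apply/negP => /(minusE km); apply/negP.
Qed.

Lemma plus_path x : x \in plus_set A w -> x \in path_set A w.
Proof. by rewrite inE => /andP []. Qed.
Lemma minus_path x : x \in minus_set A w -> x \in path_set A w.
Proof. by rewrite inE => /existsP [l /andP [/eqP -> _]]; apply: ptk_in. Qed.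
Lemma minus_plus x : x \in minus_set A w -> x \notin plus_set A w.
Proof. by move=> h; rewrite /plus_set in_setD h. Qed.

Lemma iso_minus k s : k < m -> s < m -> m < aA A s -> isolated m w k ->
  is_index A w k (aA A s) -> ptk A w k \in minus_set A w.
Proof.
move=> km sm ms iso ix; apply: minusI => //; apply/orP; right; rewrite iso /=.
have [c cA ec] := aA_in hA sm.
by apply/existsP; exists c; rewrite cA ec ms.
Qed.

Lemma plusI' k : k < m -> ~~ right_turn m w k ->
  (isolated m w k -> forall c, is_index A w k c -> c <= m) -> ptk A w k \in plus_set A w.
Proof.
move=> km nr h; apply: plusI => //; rewrite /mcond (negbTE nr) /=.
apply/negP => /andP [iso /existsP [c /and3P [_ mc ic]]].
by have := h iso c ic; lia.
Qed.

End P5.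

Section P6.
Set Default Proof Using "All".
Variable m : nat.
Hypothesis hm : 0 < m.
Variable A : {set 'I_(m.*2).+1}.
Hypothesis hA : inA A.
Variable w : seq bool.
Hypothesis hw : size w = m.-1.

Local Notation nw k := (nth false w k).

Lemma nw_cases k : nw k = true \/ nw k = false.
Proof. by case: (nw k); [left|right]. Qed.

Lemma find_minus t : t < m -> m < aA A t ->
  exists2 k, k < m & ((prow w k = t \/ pcol m w k = t) /\ ptk A w k \in minus_set A w).
Proof.
move=> tm ct.
have ld := last_diag hw hm.
case: (boolP [exists l : 'I_m, prow w l == t]) => [/existsP exR|noR].
  have exP : exists l, (l < m) && (prow w l == t).
    by case: exR => l hl; exists l; rewrite ltn_ord.
  case: (ex_minnP exP) => k0 /andP [k0m /eqP pk0] min0.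
  exists k0 => //; split; first by left.
  case: (posnP k0) => [k00|k0pos].
    subst k0; have t0 : t = 0 by rewrite -pk0 prow0.
    case: (ltnP 1 m) => hm2.
      case: (nw_cases 0) => hn.
        have ix := U_col hm hA hw (k:=0) ltac:(lia) hn (or_introl erefl).
        apply: (iso_minus hm hA hw k0m (pcol_lt hw hm k0m) _ (iso0 hm hA hw) ix).
        rewrite pcol0; apply: leq_trans ct _; apply: aA_le; rewrite ?t0; lia.
      have ix := U_row hm hA hw (k:=0) ltac:(lia) hn (or_introl erefl).
      by apply: (iso_minus hm hA hw k0m (prow_lt hm hA hw k0m) _ (iso0 hm hA hw) ix); rewrite pk0.
    have m1 : m = 1 by lia.
    have ix := U_m1 hm hA hw m1.
    by apply: (iso_minus hm hA hw k0m (prow_lt hm hA hw k0m) _ (iso0 hm hA hw) ix); rewrite pk0.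
  have pne : prow w k0.-1 != t.
    apply/negP => /eqP e; have := min0 k0.-1; rewrite e eqxx andbT; lia.
  case: (nw_cases k0.-1) => hp.
    have [s1 _] := stepH hw hm (k:=k0.-1) ltac:(lia) hp.
    by move: pne; rewrite -s1 (_ : k0.-1.+1 = k0) ?pk0 ?eqxx //; lia.
  case: (ltnP k0 m.-1) => kl.
    have [l1 r1] := turn_int hm hA hw k0pos kl.
    case: (nw_cases k0) => hn.
      by apply: (minusI hm hA hw) => //; rewrite /mcond r1 hp hn.
    have iso : isolated m w k0 by rewrite /isolated l1 r1 hp hn.
    have ix := U_row hm hA hw kl hn (or_intror hp).
    by apply: (iso_minus hm hA hw k0m (prow_lt hm hA hw k0m) _ iso ix); rewrite pk0.
  have e : k0 = m.-1 by lia.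
  have [l1 r1] := turn_last hm hA hw ltac:(lia).
  by apply: (minusI hm hA hw) => //; rewrite /mcond e r1 -e hp.
have noR' : forall l, l < m -> prow w l != t.
  by move=> l lm; move/existsPn: noR => /(_ (Ordinal lm)).
have [k [km hk]] := cover_pos hw hm tm.
have pk : pcol m w k = t by case: hk => // e; move: (noR' k km); rewrite e eqxx.
have exP : exists l, (l < m) && (pcol m w l == t) by exists k; rewrite km pk eqxx.
have ubP : forall l, (l < m) && (pcol m w l == t) -> l <= m.-1 by move=> l /andP [h _]; lia.
case: (ex_maxnP exP ubP) => k1 /andP [k1m /eqP pk1] max1.
exists k1 => //; split; first by right.
have kl : k1 < m.-1.
  case: (ltnP k1 m.-1) => // h; have e : k1 = m.-1 by lia.
  by move: (noR' _ k1m); rewrite e ld -e pk1 eqxx.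
have hn : nw k1 = true.
  case: (nw_cases k1) => // hn.
  have [_ s2] := stepV hw hm kl hn.
  by have := max1 k1.+1; rewrite s2 pk1 eqxx andbT; lia.
case: (posnP k1) => [k10|k1pos].
  subst k1.
  have ix := U_col hm hA hw kl hn (or_introl erefl).
  by apply: (iso_minus hm hA hw k1m (pcol_lt hw hm k1m) _ (iso0 hm hA hw) ix); rewrite pk1.
have [l1 r1] := turn_int hm hA hw k1pos kl.
case: (nw_cases k1.-1) => hp.
  have iso : isolated m w k1 by rewrite /isolated l1 r1 hp hn.
  have ix := U_col hm hA hw kl hn (or_intror hp).
  by apply: (iso_minus hm hA hw k1m (pcol_lt hw hm k1m) _ iso ix); rewrite pk1.
by apply: (minusI hm hA hw) => //; rewrite /mcond r1 hp hn.
Qed.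

Lemma notright0 : ~~ right_turn m w 0.
Proof. by have [_ ->] := turn0 hm hA hw. Qed.

Lemma find_plus t : t < m -> aA A t <= m ->
  exists2 k, k < m & ((prow w k = t \/ pcol m w k = t) /\ ptk A w k \in plus_set A w).
Proof.
move=> tm ct.
have ld := last_diag hw hm.
case: (boolP [exists l : 'I_m, pcol m w l == t]) => [/existsP exC|noC].
  have exP : exists l, (l < m) && (pcol m w l == t).
    by case: exC => l hl; exists l; rewrite ltn_ord.
  case: (ex_minnP exP) => k0 /andP [k0m /eqP pk0] min0.
  exists k0 => //; split; first by right.
  case: (posnP k0) => [k00|k0pos].
    subst k0; have t0 : t = m.-1 by rewrite -pk0 pcol0.
    apply: (plusI' hm hA hw) => //; first exact: notright0.
    move=> _ c /(isidx_coord hm hA hw) [] <-; rewrite /rowi /coli.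
      apply: leq_trans ct; apply: aA_le; rewrite ?prow0 ?t0; lia.
    by rewrite pk0.
  have pne : pcol m w k0.-1 != t.
    apply/negP => /eqP e; have := min0 k0.-1; rewrite e eqxx andbT; lia.
  case: (nw_cases k0.-1) => hp; last first.
    have [_ s2] := stepV hw hm (k:=k0.-1) ltac:(lia) hp.
    by move: pne; rewrite -s2 (_ : k0.-1.+1 = k0) ?pk0 ?eqxx //; lia.
  case: (ltnP k0 m.-1) => kl.
    have [l1 r1] := turn_int hm hA hw k0pos kl.
    apply: (plusI' hm hA hw) => //; first by rewrite r1 hp.
    case: (nw_cases k0) => hn; last by rewrite /isolated l1 hp hn.
    move=> _ c ix.
    have [s1 _] := stepH hw hm (k:=k0.-1) ltac:(lia) hp.
    rewrite (_ : k0.-1.+1 = k0) in s1; last lia.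
    have := isidx_row hm hA hw ix (_ : k0.-1 < m) (_ : k0.-1 != k0) (esym s1).
    move=> /(_ ltac:(lia) ltac:(apply/eqP; lia)) <-.
    by rewrite /coli pk0.
  have e : k0 = m.-1 by lia.
  have [l1 r1] := turn_last hm hA hw ltac:(lia).
  apply: (plusI' hm hA hw) => //; first by rewrite e r1 -e hp.
  by rewrite /isolated e l1 -e hp.
have noC' : forall l, l < m -> pcol m w l != t.
  by move=> l lm; move/existsPn: noC => /(_ (Ordinal lm)).
have [k [km hk]] := cover_pos hw hm tm.
have pk : prow w k = t by case: hk => // e; move: (noC' k km); rewrite e eqxx.
have exP : exists l, (l < m) && (prow w l == t) by exists k; rewrite km pk eqxx.
have ubP : forall l, (l < m) && (prow w l == t) -> l <= m.-1 by move=> l /andP [h _]; lia.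
case: (ex_maxnP exP ubP) => k1 /andP [k1m /eqP pk1] max1.
exists k1 => //; split; first by left.
have kl : k1 < m.-1.
  case: (ltnP k1 m.-1) => // h; have e : k1 = m.-1 by lia.
  by move: (noC' _ k1m); rewrite e -ld -e pk1 eqxx.
have hn : nw k1 = false.
  case: (nw_cases k1) => // hn.
  have [s1 _] := stepH hw hm kl hn.
  by have := max1 k1.+1; rewrite s1 pk1 eqxx andbT; lia.
have [_ s2] := stepV hw hm kl hn.
have shared : forall c, is_index A w k1 c -> c <= m.
  move=> c ix.
  have := isidx_col hm hA hw ix (_ : k1.+1 < m) (_ : k1.+1 != k1) s2.
  by move=> /(_ ltac:(lia) ltac:(apply/eqP; lia)) <-; rewrite /rowi pk1.
case: (posnP k1) => [k10|k1pos].
  by subst k1; apply: (plusI' hm hA hw) => //; first exact: notright0.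
have [l1 r1] := turn_int hm hA hw k1pos kl.
apply: (plusI' hm hA hw) => //; first by rewrite r1 hn andbF.
Qed.

Lemma take_eq_pos (v : seq bool) (hv : size v = m.-1) k i :
  take k v = take k w -> i <= k -> prow v i = prow w i /\ pcol m v i = pcol m w i.
Proof.
move=> e ik; rewrite /prow /pcol -(take_takel v ik) -(take_takel w ik) e; split=> //.
Qed.

Lemma notin_pos (B : {set 'I_(m.*2).+1}) (hB : inA B) (v : seq bool) (hv : size v = m.-1) x c :
  (val x.1 = c \/ val x.2 = c) -> (forall e, e \in B -> val e != c) -> x \notin path_set B v.
Proof.
move=> hx hc; apply/negP => /(in_path hm hB hv) [l lm ex].
subst x; case: hx => e.
  by move: (hc _ (ptkA1 hm hB hv lm)); rewrite e eqxx.
by move: (hc _ (ptkA2 hm hB hv lm)); rewrite e eqxx.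
Qed.

Lemma C1a (v : seq bool) (hv : size v = m.-1) : stdlt m v w ->
  exists2 x, x \in minus_set A w & x \notin path_set A v.
Proof.
case=> k [km tk vk wk].
have exP : exists j, (k < j) && ((j == m.-1) || nw j) by exists m.-1; rewrite km eqxx.
case: (ex_minnP exP) => j /andP [kj hj] minj.
have jm : j <= m.-1 by apply: minj; rewrite km eqxx.
have allV : forall i, k <= i -> i < k + (j - k) -> nw i = false.
  move=> i ki ij; case: (ltnP k i) => ki'; last by rewrite (_ : i = k) //; lia.
  case: (nw_cases i) => // hi; have := minj i; rewrite ki' hi orbT => /(_ isT); lia.
have [r1 c1] := runV hm hA hw (k:=k) (d:=j - k) ltac:(lia) allV.
rewrite (_ : k + (j - k) = j) in r1 c1; last lia.
have hp : nw j.-1 = false by apply: allV; lia.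
exists (ptk A w j).
  apply: (minusI hm hA hw); first lia.
  rewrite /mcond; case: (ltnP j m.-1) => jl.
    have hj' : nw j by case/orP: hj => // /eqP e; lia.
    by have [_ ->] := turn_int hm hA hw (ltac:(lia) : 0 < j) jl; rewrite hp hj'.
  have ej : j = m.-1 by lia.
  by rewrite ej; have [_ ->] := turn_last hm hA hw ltac:(lia); rewrite -ej hp.
apply/negP => /(in_path hm hA hv) [l lm el].
have jm' : j < m by lia.
have e1 := congr1 (fun p => val p.1) el; have e2 := congr1 (fun p => val p.2) el.
rewrite /= (ptk1 hm hA hw jm') (ptk1 hm hA hv lm) in e1.
rewrite /= (ptk2 hm hA hw jm') (ptk2 hm hA hv lm) in e2.
have q1 := aA_inj hA (prow_lt hm hA hw jm') (prow_lt hm hA hv lm) e1.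
have q2 := aA_inj hA (pcol_lt hw hm jm') (pcol_lt hv hm lm) e2.
have [pv cv] := take_eq_pos hv tk (leqnn k).
case: (leqP l k) => lk.
  have := @prow_mono v l k lk; lia.
have [s1 s2] := stepH hv hm km vk.
have := @pcol_mono m v k.+1 l lk.
have := pcol_pos hm hA hv km; lia.
Qed.

Lemma C3a (v : seq bool) (hv : size v = m.-1) : stdlt m w v ->
  exists2 x, x \in plus_set A w & x \notin path_set A v.
Proof.
case=> k [km tk wk vk].
have exP : exists j, (k < j) && ((j == m.-1) || ~~ nw j) by exists m.-1; rewrite km eqxx.
case: (ex_minnP exP) => j /andP [kj hj] minj.
have jm : j <= m.-1 by apply: minj; rewrite km eqxx.
have allH : forall i, k <= i -> i < k + (j - k) -> nw i = true.
  move=> i ki ij; case: (ltnP k i) => ki'; last by rewrite (_ : i = k) //; lia.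
  case: (nw_cases i) => // hi; have := minj i; rewrite ki' hi orbT => /(_ isT); lia.
have [r1 c1] := runH hm hA hw (k:=k) (d:=j - k) ltac:(lia) allH.
rewrite (_ : k + (j - k) = j) in r1 c1; last lia.
have hp : nw j.-1 = true by apply: allH; lia.
have pp := pcol_pos hm hA hw km.
have ck : j - k <= pcol m w k.
  have := prow_le hw hm (_ : j < m) => /(_ ltac:(lia)).
  rewrite r1 c1; have := pcolE hw hm (_ : k < m) => /(_ ltac:(lia)). lia.
exists (ptk A w j).
  apply: (plusI' hm hA hw); first lia.
    case: (ltnP j m.-1) => jl.
      have hj' : ~~ nw j by case/orP: hj => // /eqP e; lia.
      by have [_ ->] := turn_int hm hA hw (ltac:(lia) : 0 < j) jl; rewrite ?hp.
    have ej : j = m.-1 by lia.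
    by rewrite ej; have [_ ->] := turn_last hm hA hw ltac:(lia); rewrite -ej hp.
  case: (ltnP j m.-1) => jl.
    have hj' : ~~ nw j by case/orP: hj => // /eqP e; lia.
    by have [l1 _] := turn_int hm hA hw (ltac:(lia) : 0 < j) jl; rewrite /isolated l1 hp hj'.
  have ej : j = m.-1 by lia.
  by have [l1 _] := turn_last hm hA hw ltac:(lia); rewrite /isolated ej l1 -ej hp.
apply/negP => /(in_path hm hA hv) [l lm el].
have jm' : j < m by lia.
have e1 := congr1 (fun p => val p.1) el; have e2 := congr1 (fun p => val p.2) el.
rewrite /= (ptk1 hm hA hw jm') (ptk1 hm hA hv lm) in e1.
rewrite /= (ptk2 hm hA hw jm') (ptk2 hm hA hv lm) in e2.
have q1 := aA_inj hA (prow_lt hm hA hw jm') (prow_lt hm hA hv lm) e1.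
have q2 := aA_inj hA (pcol_lt hw hm jm') (pcol_lt hv hm lm) e2.
have [pv cv] := take_eq_pos hv (esym tk) (leqnn k).
case: (leqP l k) => lk.
  have := @pcol_mono m v l k lk; lia.
have [s1 s2] := stepV hv hm km vk.
have := @prow_mono v k.+1 l lk; lia.
Qed.

End P6.

Lemma std_tri m (v w : seq bool) : size v = m.-1 -> size w = m.-1 -> v <> w ->
  stdlt m v w \/ stdlt m w v.
Proof.
move=> hv hw ne.
have exP : exists i, (i < m.-1) && (nth false v i != nth false w i).
  case: (boolP [exists i : 'I_m.-1, nth false v i != nth false w i]).
    by case/existsP => i h; exists i; rewrite ltn_ord h.
  move/existsPn => h; exfalso; apply: ne.
  apply: (eq_from_nth (x0 := false)); first by rewrite hv hw.
  by move=> i; rewrite hv => im; move: (h (Ordinal im)); rewrite negbK => /eqP.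
case: (ex_minnP exP) => k /andP [km hk] mink.
have tk : take k v = take k w.
  apply: (eq_from_nth (x0 := false)); first by rewrite !size_takel ?hv ?hw //; lia.
  move=> i; rewrite size_takel ?hv; last lia.
  move=> ik; rewrite !nth_take //.
  case: (eqVneq (nth false v i) (nth false w i)) => // d.
  by have := mink i; rewrite d andbT; lia.
case hvk: (nth false v k); move: hk; rewrite hvk => hk.
  by left; exists k; split=> //; move: hk; case: (nth false w k).
by right; exists k; split=> //; move: hk; case: (nth false w k).
Qed.

Lemma lex_tri m (A B : {set 'I_(m.*2).+1}) : inA A -> inA B -> A <> B ->
  lexlt A B \/ lexlt B A.
Proof.
move=> hA hB ne.
have exP : exists l, (l < m) && (aA A l != aA B l).
  case: (boolP [exists l : 'I_m, aA A l != aA B l]).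
    by case/existsP => i h; exists i; rewrite ltn_ord h.
  move/existsPn => h; exfalso; apply: ne.
  have eq : forall l, l < m -> aA A l = aA B l.
    by move=> l lm; move: (h (Ordinal lm)); rewrite negbK => /eqP.
  apply/setP => c; apply/idP/idP => cX.
    have [t tm et] := idxA hA cX; have [e eB ee] := aA_in hB tm.
    by have -> : c = e by apply: val_inj; rewrite ee -eq.
  have [t tm et] := idxA hB cX; have [e eA ee] := aA_in hA tm.
  by have -> : c = e by apply: val_inj; rewrite ee eq.
case: (ex_minnP exP) => k /andP [km hk] mink.
have pre : forall l, l < k -> aA A l = aA B l.
  move=> l lk; apply/eqP; apply/negPn/negP => d.
  by have := mink l; rewrite d andbT; lia.
case: (ltngtP (aA A k) (aA B k)) => h.
- by left; exists k; split.
- by right; exists k; split=> // l /pre.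
- by move: hk; rewrite h eqxx.
Qed.

Section P7.
Set Default Proof Using "All".
Variable m : nat.
Hypothesis hm : 0 < m.
Variable A : {set 'I_(m.*2).+1}.
Hypothesis hA : inA A.
Variable w : seq bool.
Hypothesis hw : size w = m.-1.

Lemma C1b (B : {set 'I_(m.*2).+1}) (hB : inA B) (v : seq bool) (hv : size v = m.-1) :
  lexlt B A -> exists2 x, x \in minus_set A w & x \notin path_set B v.
Proof.
case=> d [dm pre lt].
have bnotA : forall a, a \in A -> val a != aA B d.
  move=> a aA; apply/eqP => e; have [t tm et] := idxA hA aA.
  case: (ltnP t d) => td.
    have := aA_lt hB td dm; rewrite pre // et e ltnn //.
  have := aA_le hA td tm; rewrite et e; lia.
have [cb cbB ecb] := aA_in hB dm.
have {}ecb : nat_of_ord cb = aA B d := ecb.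
have cbnA : cb \notin A by apply/negP => /bnotA /eqP; apply; exact: ecb.
have [c cA ec] := complA hA (inA_pos hB cbB) cbnA.
have {}ec : nat_of_ord c + nat_of_ord cb = (m.*2).+1 := ec.
have cnB : forall e, e \in B -> val e != val c.
  move=> e eB; apply/eqP => ee; have := inA_nc hB eB cbB; rewrite ee ec eqxx //.
have [t tm et] := idxA hA cA.
have cm : m < aA A t.
  rewrite et; case: (ltngtP (nat_of_ord c) (nat_of_ord cb)) => h.
  - exfalso; have td : t < d by rewrite -(aA_ltE hA tm dm) et; lia.
    have [e eB ee] := aA_in hB tm.
    by move: (cnB e eB); rewrite ee pre // et eqxx.
  - move: ec; lia.
  - move: ec; rewrite h; lia.
have [k km [hk xm]] := find_minus hm hA hw tm cm.
exists (ptk A w k) => //.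
apply: (notin_pos hm hA hw hB hv (c := val c)) => //.
by case: hk => e; [left; rewrite ptk1 // e et | right; rewrite ptk2 // e et].
Qed.

Lemma C3b (B : {set 'I_(m.*2).+1}) (hB : inA B) (v : seq bool) (hv : size v = m.-1) :
  lexlt A B -> exists2 x, x \in plus_set A w & x \notin path_set B v.
Proof.
case=> d [dm pre lt].
have anotB : forall e, e \in B -> val e != aA A d.
  move=> e eB; apply/eqP => ee; have {}ee : nat_of_ord e = aA A d := ee.
  have [t tm et] := idxA hB eB.
  case: (ltnP t d) => td.
    have := aA_lt hA td dm; have := pre t td; lia.
  have := aA_le hB td tm; lia.
have [ca caA eca] := aA_in hA dm.
have {}eca : nat_of_ord ca = aA A d := eca.
have canB : ca \notin B by apply/negP => /anotB /eqP; apply; exact: eca.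
have [a' aB ea] := complA hB (inA_pos hA caA) canB.
have {}ea : nat_of_ord a' + nat_of_ord ca = (m.*2).+1 := ea.
have anA : forall e, e \in A -> val e != val a'.
  move=> e eA; apply/eqP => ee; have := inA_nc hA eA caA; rewrite ee ea eqxx //.
have am : aA A d <= m.
  rewrite -eca; case: (ltngtP (nat_of_ord a') (nat_of_ord ca)) => h.
  - exfalso; have [t tm et] := idxA hB aB.
    have td : t < d by rewrite -(aA_ltE hB tm dm) et; lia.
    have [e eA ee] := aA_in hA tm.
    by move: (anA e eA); rewrite ee pre // et eqxx.
  - move: ea; lia.
  - move: ea; rewrite h; lia.
have [k km [hk xp]] := find_plus hm hA hw dm am.
exists (ptk A w k) => //.
apply: (notin_pos hm hA hw hB hv (c := aA A d)) => //.
by case: hk => e; [left; rewrite ptk1 // e | right; rewrite ptk2 // e].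
Qed.

Lemma coordA (A' : {set 'I_(m.*2).+1}) (hA' : inA A') (w' : seq bool) (hw' : size w' = m.-1) :
  path_set A w \subset path_set A' w' -> A \subset A'.
Proof.
move=> sub; apply/subsetP => c cA.
have [t tm et] := idxA hA cA.
have [k [km hk]] := cover_pos hw hm tm.
have := subsetP sub _ (ptk_in hm hA hw km).
case/(in_path hm hA' hw') => l lm el.
case: hk => e.
  have := ptkA1 hm hA' hw' lm; rewrite -el.
  by have -> : (ptk A w k).1 = c by apply: val_inj; rewrite (ptk1 hm hA hw km) e et.
have := ptkA2 hm hA' hw' lm; rewrite -el.
by have -> : (ptk A w k).2 = c by apply: val_inj; rewrite (ptk2 hm hA hw km) e et.
Qed.

Lemma K_minus x (B : {set 'I_(m.*2).+1}) (hB : inA B) (v : seq bool) (hv : size v = m.-1) :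
  x \in minus_set A w -> path_set A w :\ x \subset path_set B v ->
  path_set B v <> path_set A w -> lexlt B A \/ (B = A /\ stdlt m v w).
Proof.
move=> xm sub ne.
have contra : forall x', x' \in plus_set A w -> x' \notin path_set B v -> False.
  move=> x' xp xn.
  have xF := plus_path hm hA hw xp.
  case: (eqVneq x' x) => [ex|nx].
    by move: (minus_plus hm hA hw xm); rewrite -ex xp.
  by move: xn; rewrite (subsetP sub) // in_setD1 nx xF.
case: (eqVneq B A) => [eBA|nBA].
  subst B; right; split=> //.
  have nvw : v <> w by move=> evw; apply: ne; rewrite evw.
  case: (std_tri hv hw nvw) => // h.
  by have [x' xp xn] := C3a hm hA hw hv h; case: (contra x' xp xn).
case: (lex_tri hB hA (fun h => (negP nBA) (introT eqP h))) => h; first by left.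
by have [x' xp xn] := C3b hB hv h; case: (contra x' xp xn).
Qed.

Lemma K_plus x (B : {set 'I_(m.*2).+1}) (hB : inA B) (v : seq bool) (hv : size v = m.-1) :
  x \in plus_set A w -> path_set A w :\ x \subset path_set B v ->
  path_set B v <> path_set A w -> lexlt A B \/ (B = A /\ stdlt m w v).
Proof.
move=> xp sub ne.
have contra : forall x', x' \in minus_set A w -> x' \notin path_set B v -> False.
  move=> x' xm xn.
  have xF := minus_path hm hA hw xm.
  case: (eqVneq x' x) => [ex|nx].
    by move: (minus_plus hm hA hw xm); rewrite ex xp.
  by move: xn; rewrite (subsetP sub) // in_setD1 nx xF.
case: (eqVneq B A) => [eBA|nBA].
  subst B; right; split=> //.
  have nvw : w <> v by move=> evw; apply: ne; rewrite evw.
  case: (std_tri hw hv nvw) => // h.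
  by have [x' xm xn] := C1a hm hA hw hv h; case: (contra x' xm xn).
case: (lex_tri hA hB (fun h => (negP nBA) (introT eqP (esym h)))) => h; first by left.
by have [x' xm xn] := C1b hB hv h; case: (contra x' xm xn).
Qed.

End P7.

Lemma path_uniq m (hm : 0 < m) (A : {set 'I_(m.*2).+1}) (hA : inA A) (w : seq bool) (hw : size w = m.-1)
  (A' : {set 'I_(m.*2).+1}) (hA' : inA A') (w' : seq bool) (hw' : size w' = m.-1) :
  path_set A w = path_set A' w' -> A = A' /\ w = w'.
Proof.
move=> e.
have eA : A = A'.
  apply/eqP; rewrite eqEsubset (coordA hm hA hw hA' hw') ?e //.
  by apply: (coordA hm hA' hw' hA hw); rewrite e.
subst A'; split=> //.
case: (boolP (w == w')) => [/eqP //|/eqP nw].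
case: (std_tri hw' hw (fun h => nw (esym h))) => h.
  have [x xm xn] := C1a hm hA hw hw' h.
  by move: xn; rewrite -e (minus_path hm hA hw xm).
have [x xm xn] := C1a hm hA hw' hw h.
by move: xn; rewrite e (minus_path hm hA hw' xm).
Qed.


Ltac slia := simpl in *; lia.

Definition okp m (p y : pt m) :=
  ~~ ((val p.1 < val y.1) && (val p.2 < val y.2)) && ~~ ((val y.1 < val p.1) && (val y.2 < val p.2)).

Lemma crossing m (S : {set pt m}) (z : 'I_(m.*2).+1) : chainS S ->
  (forall p, p \in S -> val p.1 <= val p.2) ->
  exists y : pt m, [/\ (y.1 = z /\ (y.2 = z \/ exists2 p, p \in S & y.2 = p.2)) \/
                       (y.2 = z /\ exists2 p, p \in S & y.1 = p.1),
     val y.1 <= val y.2 & forall p, p \in S -> okp p y].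
Proof.
move=> ch le.
case: (set_0Vmem S) => [S0|[p0 p0S]].
  exists (z, z); split=> //; first by left; split=> //; left.
  by move=> p; rewrite S0 inE.
pose R := [set p in S | val p.1 <= val z].
pose R' := [set p in S | val z <= val p.2].
have h1 : forall p, p \in S -> val p.1 <= val z -> p \in R by move=> p pS h; rewrite inE pS h.
have h2 : forall p, p \in S -> val z <= val p.2 -> p \in R' by move=> p pS h; rewrite inE pS h.
case: (set_0Vmem R) => [R0|[q0 q0R]].
  have allR : forall p, p \in S -> val z < val p.1.
    move=> p pS; case: (leqP (val p.1) (val z)) => // h.
    by move: (h1 p pS h); rewrite R0 inE.
  case: (@arg_maxnP _ p0 (fun p : pt m => p \in S) (fun p : pt m => val p.2) p0S) => pM pMS maxM.
  case: (leqP (val z) (val pM.2)) => hz.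
    exists (z, pM.2); split=> //; first by left; split=> //; right; exists pM.
    move=> p pS; rewrite /okp /=; have := allR p pS; have := maxM p pS; slia.
  exfalso; have := allR p0 p0S; have := maxM p0 p0S; have := le p0 p0S; slia.
case: (@arg_minnP _ q0 (fun p : pt m => p \in R) (fun p : pt m => val p.2) q0R) => q qR minq.
have qS : q \in S by move: qR; rewrite inE; case/andP.
have q1 : val q.1 <= val z by move: qR; rewrite inE; case/andP.
case: (leqP (val z) (val q.2)) => hz.
  exists (z, q.2); split=> //; first by left; split=> //; right; exists q.
  move=> p pS; rewrite /okp /=; apply/andP; split.
    case: (leqP (val p.1) (val z)) => h; last slia.
    by have := minq p (h1 p pS h); slia.
  have := ch q p qS pS; slia.
case: (set_0Vmem R') => [R0'|[q1' q1R]].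
  have allR : forall p, p \in S -> val p.2 < val z.
    move=> p pS; case: (ltnP (val p.2) (val z)) => // h.
    by move: (h2 p pS h); rewrite R0' inE.
  case: (@arg_minnP _ p0 (fun p : pt m => p \in S) (fun p : pt m => val p.1) p0S) => pm pmS minm.
  exists (pm.1, z); split=> /=.
  - by right; split=> //; exists pm.
  - have := le pm pmS; have := allR pm pmS; slia.
  - move=> p pS; rewrite /okp /=; have := allR p pS; have := minm p pS; slia.
case: (@arg_maxnP _ q1' (fun p : pt m => p \in R') (fun p : pt m => val p.1) q1R) => q' q'R maxq.
have q'S : q' \in S by move: q'R; rewrite inE; case/andP.
have q'2 : val z <= val q'.2 by move: q'R; rewrite inE; case/andP.
case: (leqP (val q'.1) (val z)) => hz'.
  exists (q'.1, z); split=> //=.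
  - by right; split=> //; exists q'.
  move=> p pS; rewrite /okp /=; apply/andP; split.
    have := ch p q' pS q'S; slia.
  case: (leqP (val z) (val p.2)) => h; last slia.
  by have := maxq p (h2 p pS h); slia.
exfalso; have := ch q q' qS q'S; slia.
Qed.

Section P8.
Set Default Proof Using "All".
Variable m : nat.
Hypothesis hm : 0 < m.
Variable A : {set 'I_(m.*2).+1}.
Hypothesis hA : inA A.
Variable w : seq bool.
Hypothesis hw : size w = m.-1.

Local Notation F := (path_set A w).

Definition alt (x : pt m) := exists B v, [/\ inA B, size v = m.-1,
  F :\ x \subset path_set B v & path_set B v <> F].

Lemma extend x (B : {set 'I_(m.*2).+1}) (hB : inA B) (y : pt m) :
  (forall p, p \in F :\ x -> p.1 \in B /\ p.2 \in B) ->
  y.1 \in B -> y.2 \in B -> val y.1 <= val y.2 ->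
  (forall p, p \in F :\ x -> okp p y) -> y \notin F -> alt x.
Proof.
move=> hS y1 y2 y12 oky ny.
pose T := (F :\ x) :|: [set y].
have hT : forall p, p \in T -> [/\ p.1 \in B, p.2 \in B & val p.1 <= val p.2].
  move=> p; rewrite in_setU in_set1 in_setD1 => /orP [/andP [px pF]|/eqP -> //].
  have [a b] := hS p ltac:(by rewrite in_setD1 px pF); split=> //.
  have [k km ->] := (in_path hm hA hw p).1 pF.
  exact: ptk_le.
have chT : chainS T.
  move=> p q; rewrite !in_setU !in_set1 !in_setD1 => /orP [/andP [px pF]|/eqP ->] /orP [/andP [qx qF]|/eqP ->].
  - exact: (path_chain hm hA hw).
  - by have := oky p ltac:(by rewrite in_setD1 px pF); rewrite /okp => /andP [].
  - by have := oky q ltac:(by rewrite in_setD1 qx qF); rewrite /okp => /andP [].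
  - by apply/negP => /andP; rewrite ltnn; case.
have [v [sv sub]] := build hm hB hT chT.
exists B, v; split=> //.
  by apply: subset_trans sub; apply/subsetP => p pS; rewrite in_setU pS.
have yT : y \in T by rewrite in_setU in_set1 eqxx orbT.
by move=> e; move: ny; rewrite -e (subsetP sub _ yT).
Qed.

Lemma alt_pos k a b : k < m -> a <= b -> b < m ->
  (forall l, l < m -> l != k ->
     ~~ ((prow w l < a) && (pcol m w l < b)) && ~~ ((a < prow w l) && (b < pcol m w l))) ->
  (forall l, l < m -> ~~ ((prow w l == a) && (pcol m w l == b))) ->
  alt (ptk A w k).
Proof.
move=> km ab bm hch hne.
have am : a < m by lia.
have [c1 c1A e1] := aA_in hA am; have [c2 c2A e2] := aA_in hA bm.
apply: (@extend _ A hA (c1, c2)) => //=.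
- move=> p; rewrite in_setD1 => /andP [_ pF].
  have [l lm ->] := (in_path hm hA hw p).1 pF.
  by split; [apply: ptkA1 | apply: ptkA2].
- by rewrite e1 e2; apply: aA_le.
- move=> p; rewrite in_setD1 => /andP [px pF].
  have [l lm el] := (in_path hm hA hw p).1 pF.
  have lk : l != k by apply/negP => /eqP e; move: px; rewrite el e eqxx.
  rewrite el /okp (ptk1 hm hA hw lm) (ptk2 hm hA hw lm) /= e1 e2.
  rewrite !aA_ltE ?(prow_lt hm hA hw lm) ?(pcol_lt hw hm lm) //.
  exact: hch.
- apply/negP => /(in_path hm hA hw) [l lm el].
  have f1 := congr1 (fun p => val p.1) el; have f2 := congr1 (fun p => val p.2) el.
  rewrite /= (ptk1 hm hA hw lm) e1 in f1; rewrite /= (ptk2 hm hA hw lm) e2 in f2.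
  have g1 := aA_inj hA am (prow_lt hm hA hw lm) f1.
  have g2 := aA_inj hA bm (pcol_lt hw hm lm) f2.
  by move: (hne l lm); rewrite -g1 -g2 !eqxx.
Qed.

End P8.

Section P9.
Set Default Proof Using "All".
Variable m : nat.
Hypothesis hm : 0 < m.
Variable A : {set 'I_(m.*2).+1}.
Hypothesis hA : inA A.
Variable w : seq bool.
Hypothesis hw : size w = m.-1.

Local Notation F := (path_set A w).
Local Notation nw k := (nth false w k).

Lemma before_after k l : k < m -> l < m ->
  (l < k -> prow w l <= prow w k.-1 /\ pcol m w k.-1 <= pcol m w l) /\
  (k < l -> prow w k.+1 <= prow w l /\ pcol m w l <= pcol m w k.+1).
Proof.
move=> km lm; split=> h.
  by split; [apply: prow_mono | apply: pcol_mono]; lia.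
by split; [apply: prow_mono | apply: pcol_mono]; lia.
Qed.

Lemma alt_turn k : k < m -> right_turn m w k || left_turn m w k -> alt A w (ptk A w k).
Proof.
move=> km ht.
have [l0 r0] := turn0 hm hA hw.
case: (posnP k) => [k0|kpos]; first by move: ht; rewrite k0 l0 r0.
have pk := prow_le hw hm km; have ck := pcol_lt hw hm km.
case: (ltnP k m.-1) => kl.
  have [l1 r1] := turn_int hm hA hw kpos kl.
  have kk : k.-1.+1 = k by lia.
  have pp := pcol_pos hm hA hw kl.
  case: (nw_cases hm hA hw k.-1) => hp; case: (nw_cases hm hA hw k) => hn; move: ht; rewrite l1 r1 hp hn //= => _.
  -
    have [a1 a2] := stepH hw hm (k:=k.-1) ltac:(lia) hp; rewrite kk in a1 a2.
    have [b1 b2] := stepV hw hm kl hn.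
    have pp' := pcol_pos hm hA hw (ltac:(lia) : k.-1 < m.-1).
    have cm := pcol_lt hw hm (ltac:(lia) : k.-1 < m).
    apply: (alt_pos hm hA hw (a := (prow w k).+1) (b := (pcol m w k).+1) km); try lia.
      move=> l lm lk; have [h1 h2] := before_after km lm.
      case: (ltngtP l k) => c; [have := h1 c | have := h2 c | lia]; lia.
    move=> l lm; have [h1 h2] := before_after km lm.
    case: (ltngtP l k) => c; [have := h1 c | have := h2 c | rewrite c]; lia.
  -
    have [a1 a2] := stepV hw hm (k:=k.-1) ltac:(lia) hp; rewrite kk in a1 a2.
    have [b1 b2] := stepH hw hm kl hn.
    apply: (alt_pos hm hA hw (a := (prow w k).-1) (b := (pcol m w k).-1) km); try lia.
      move=> l lm lk; have [h1 h2] := before_after km lm.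
      case: (ltngtP l k) => c; [have := h1 c | have := h2 c | lia]; lia.
    move=> l lm; have [h1 h2] := before_after km lm.
    case: (ltngtP l k) => c; [have := h1 c | have := h2 c | rewrite c]; lia.
have ek : k = m.-1 by lia.
have m2 : 1 < m by lia.
have [l1 r1] := turn_last hm hA hw m2.
have kk : k.-1.+1 = k by lia.
have ld := last_diag hw hm.
case: (nw_cases hm hA hw m.-1.-1) => hp; move: ht; rewrite ek l1 r1 hp //= => _; rewrite -ek.
- have [a1 a2] := stepH hw hm (k:=k.-1) ltac:(lia) ltac:(by rewrite ek); rewrite kk in a1 a2.
  have pp' := pcol_pos hm hA hw (ltac:(lia) : k.-1 < m.-1).
  have cm := pcol_lt hw hm (ltac:(lia) : k.-1 < m).
  apply: (alt_pos hm hA hw (a := (prow w k).+1) (b := (pcol m w k).+1) km); try lia.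
    move=> l lm lk; have [h1 h2] := before_after km lm.
    case: (ltngtP l k) => c; [have := h1 c | lia | lia]; lia.
  move=> l lm; have [h1 h2] := before_after km lm.
  case: (ltngtP l k) => c; [have := h1 c | lia | rewrite c]; lia.
- have [a1 a2] := stepV hw hm (k:=k.-1) ltac:(lia) ltac:(by rewrite ek); rewrite kk in a1 a2.
  apply: (alt_pos hm hA hw (a := (prow w k).-1) (b := (pcol m w k).-1) km); try lia.
    move=> l lm lk; have [h1 h2] := before_after km lm.
    case: (ltngtP l k) => c; [have := h1 c | lia | lia]; lia.
  move=> l lm; have [h1 h2] := before_after km lm.
  case: (ltngtP l k) => c; [have := h1 c | lia | rewrite c]; lia.
Qed.

End P9.

Section P10.
Set Default Proof Using "All".
Variable m : nat.
Hypothesis hm : 0 < m.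
Variable A : {set 'I_(m.*2).+1}.
Hypothesis hA : inA A.
Variable w : seq bool.
Hypothesis hw : size w = m.-1.

Local Notation F := (path_set A w).
Local Notation nw k := (nth false w k).

Lemma alt_iso k (c : 'I_(m.*2).+1) : k < m -> c \in A -> is_index A w k c ->
  alt A w (ptk A w k).
Proof.
move=> km cA ix.
have c0 := inA_pos hA cA.
have cle : nat_of_ord c <= m.*2 by have := ltn_ord c; lia.
pose c' : 'I_(m.*2).+1 := inord ((m.*2).+1 - c).
have ec' : nat_of_ord c' = (m.*2).+1 - c by rewrite /c' /= inordK //; lia.
have c'nA : c' \notin A.
  apply/negP => h; have := inA_nc hA cA h; rewrite ec'; lia.
pose B := c' |: (A :\ c).
have hB : inA B.
  apply/and3P; split.
  - rewrite cardsU1 in_setD1 (negbTE c'nA) andbF /=.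
    by have := cardsD1 c A; rewrite cA (inA_card hA) /= => e; apply/eqP; apply: esym.
  - apply/forallP => i; apply/implyP; rewrite in_setU1 in_setD1 => /orP [/eqP ->|/andP [_ iA]].
      rewrite ec'; lia.
    by have := inA_pos hA iA.
  - apply/forallP => i; apply/implyP; rewrite in_setU1 in_setD1 => hi.
    apply/forallP => j; apply/implyP; rewrite in_setU1 in_setD1 => hj.
    case/orP: hi => [/eqP ->|/andP [ic iA]]; case/orP: hj => [/eqP ->|/andP [jc jA]].
    + rewrite ec'; lia.
    + rewrite ec'; apply/eqP => e; move: jc; rewrite (_ : j = c) ?eqxx //.
      apply: val_inj => /=; move: e; have := ltn_ord j; lia.
    + rewrite ec'; apply/eqP => e; move: ic; rewrite (_ : i = c) ?eqxx //.
      apply: val_inj => /=; move: e; have := ltn_ord i; lia.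
    + by have := inA_nc hA iA jA.
have iv := (andP ix).2.
have SB : forall p, p \in F :\ ptk A w k -> p.1 \in B /\ p.2 \in B.
  move=> p; rewrite in_setD1 => /andP [px pF].
  have [l lm el] := (in_path hm hA hw p).1 pF.
  have lk : l != k by apply/negP => /eqP e; move: px; rewrite el e eqxx.
  have := (forallP iv) (Ordinal lm); rewrite /= lk /= => /andP [r1 r2].
  rewrite el !in_setU1 !in_setD1 (ptkA1 hm hA hw lm) (ptkA2 hm hA hw lm) !andbT.
  split; apply/orP; right; apply/negP => /eqP e.
    by move: r1; rewrite /rowi -(ptk1 hm hA hw lm) e eqxx.
  by move: r2; rewrite /coli -(ptk2 hm hA hw lm) e eqxx.
have chS : chainS (F :\ ptk A w k).
  move=> p q; rewrite !in_setD1 => /andP [_ pF] /andP [_ qF].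
  exact: (path_chain hm hA hw).
have leS : forall p, p \in F :\ ptk A w k -> val p.1 <= val p.2.
  move=> p; rewrite in_setD1 => /andP [_ pF].
  have [l lm ->] := (in_path hm hA hw p).1 pF; exact: ptk_le.
have [y [hy y12 oky]] := crossing c' chS leS.
have c'B : c' \in B by rewrite in_setU1 eqxx.
have yB : y.1 \in B /\ y.2 \in B.
  case: hy => [[-> [->|[p pS ->]]]|[-> [p pS ->]]]; split=> //; by case: (SB p pS).
have nF : forall p, p \in F -> p.1 != c' /\ p.2 != c'.
  move=> p pF; have [l lm ->] := (in_path hm hA hw p).1 pF.
  by split; apply/negP => /eqP e; move: c'nA; rewrite -e ?(ptkA1 hm hA hw lm) ?(ptkA2 hm hA hw lm).
apply: (extend hm hA hw hB SB yB.1 yB.2 y12 oky).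
apply/negP => yF; have [n1 n2] := nF y yF.
by case: hy => [[e _]|[e _]]; [move: n1 | move: n2]; rewrite e eqxx.
Qed.

Lemma iso_index k : k < m -> isolated m w k -> exists2 c : 'I_(m.*2).+1, c \in A & is_index A w k c.
Proof.
move=> km iso.
case: (ltnP 1 m) => m2; last first.
  have m1 : m = 1 by lia.
  have k0 : k = 0 by lia.
  have [c cA ec] := aA_in hA (prow_lt hm hA hw km).
  by exists c => //; rewrite ec k0; apply: U_m1 => //; rewrite k0 in km.
have col : k < m.-1 -> nw k = true -> (k = 0 \/ nw k.-1 = true) ->
    exists2 c : 'I_(m.*2).+1, c \in A & is_index A w k c.
  move=> kl hn hp; have [c cA ec] := aA_in hA (pcol_lt hw hm km).
  by exists c => //; rewrite ec; apply: U_col.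
have row : k < m.-1 -> nw k = false -> (k = 0 \/ nw k.-1 = false) ->
    exists2 c : 'I_(m.*2).+1, c \in A & is_index A w k c.
  move=> kl hn hp; have [c cA ec] := aA_in hA (prow_lt hm hA hw km).
  by exists c => //; rewrite ec; apply: U_row.
case: (ltnP k m.-1) => kl; last first.
  have ek : k = m.-1 by lia.
  move: iso; rewrite /isolated ek; have [-> ->] := turn_last hm hA hw m2.
  by case: (nw m.-1.-1).
case: (posnP k) => [k0|kpos].
  by case: (nw_cases hm hA hw k) => hn; [apply: col | apply: row]; rewrite // k0; left.
move: iso; rewrite /isolated; have [-> ->] := turn_int hm hA hw kpos kl.
by case: (nw_cases hm hA hw k.-1) => hp; case: (nw_cases hm hA hw k) => hn;
  rewrite hp hn //= => _; [apply: col | apply: row]; rewrite //; right.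
Qed.

Lemma mk_minus x : x \in minus_set A w -> exists B v, [/\ inA B, size v = m.-1,
  F :\ x \subset path_set B v, facet (path_set B v) & lexlt B A \/ (B = A /\ stdlt m v w)].
Proof.
move=> xm.
have al : alt A w x.
  move: (xm); rewrite inE => /existsP [k /andP [/eqP -> hk]].
  case/orP: hk => [r|/andP [iso /existsP [c /and3P [cA _ ix]]]].
    by apply: alt_turn => //; rewrite r.
  exact: (alt_iso (ltn_ord k) cA ix).
case: al => B [v [hB hv sub ne]].
exists B, v; split=> //; first exact: facet_path.
exact: (K_minus hm hA hw hB hv xm sub ne).
Qed.

Lemma mk_plus x : x \in plus_set A w -> exists B v, [/\ inA B, size v = m.-1,
  F :\ x \subset path_set B v, facet (path_set B v) & lexlt A B \/ (B = A /\ stdlt m w v)].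
Proof.
move=> xp.
have al : alt A w x.
  have xF := plus_path hm hA hw xp.
  have [k km ek] := (in_path hm hA hw x).1 xF.
  have nm : ~~ mcond A w k.
    apply/negP => h; have := minus_plus hm hA hw (minusI hm hA hw km h).
    by rewrite -ek xp.
  rewrite ek; case: (boolP (left_turn m w k)) => lt.
    by apply: alt_turn => //; rewrite lt orbT.
  move: nm; rewrite /mcond negb_or => /andP [nr _].
  have iso : isolated m w k by rewrite /isolated lt nr.
  have [c cA ix] := iso_index km iso.
  exact: (alt_iso km cA ix).
case: al => B [v [hB hv sub ne]].
exists B, v; split=> //; first exact: facet_path.
exact: (K_plus hm hA hw hB hv xp sub ne).
Qed.

End P10.

Lemma sub_del m (H F G : {set pt m}) x : H \subset F -> H \subset G -> x \notin G ->
  H \subset F :\ x.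
Proof.
move=> hF hG xG; apply/subsetP => h hH; rewrite in_setD1 (subsetP hF _ hH) andbT.
by apply/negP => /eqP e; move: xG; rewrite -e (subsetP hG _ hH).
Qed.

Lemma sub_del2 m (H F G : {set pt m}) x : H \subset F :\ x -> F :\ x \subset G ->
  H \subset F /\ H \subset G.
Proof.
move=> h1 h2; split; first by apply: subset_trans h1 _; apply: subsetDl.
exact: subset_trans h1 h2.
Qed.

Theorem proposition5p4 (m : nat) (hm : 0 < m) :
  forall F : {set pt m}, facet F ->
  forall (A : {set 'I_(m.*2).+1}) (w : seq bool),
    inA A -> size w = m.-1 -> F = path_set A w ->
    (forall H : {set pt m},
        (H \subset F /\ exists G, facet_lt G F /\ H \subset G) <->
        (exists x, x \in minus_set A w /\ H \subset F :\ x)) /\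
    (forall H : {set pt m},
        (H \subset F /\ exists G, facet_lt F G /\ H \subset G) <->
        (exists x, x \in plus_set A w /\ H \subset F :\ x)).
Proof.
move=> F fF A w hA hw eF; split=> H; split.
- case=> HF [G [[B [A' [v [w' [[hB hA' hv hw'] [eG eF' fG _ ord]]]]]] HG]].
  have [eA ew] := path_uniq hm hA hw hA' hw' (etrans (esym eF) eF').
  subst A' w' G.
  case: ord => [lt|[eB st]].
    have [x xm xn] := C1b hm hA hw hB hv lt.
    by exists x; split=> //; apply: sub_del HF HG xn.
  subst B; have [x xm xn] := C1a hm hA hw hv st.
  by exists x; split=> //; apply: sub_del HF HG xn.
- case=> x [xm HS].
  have [B [v [hB hv sub fG ord]]] := mk_minus hm hA hw xm.
  rewrite eF in HS *.
  have [h1 h2] := sub_del2 HS sub.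
  split=> //; exists (path_set B v); split=> //.
  exists B, A, v, w; split=> //; split=> //; by rewrite -eF.
- case=> HF [G [[B' [A' [v' [w' [[hB' hA' hv' hw'] [eF' eG fF' fG ord]]]]]] HG]].
  have [eB ev] := path_uniq hm hA hw hB' hv' (etrans (esym eF) eF').
  subst B' v' G.
  case: ord => [lt|[eA st]].
    have [x xp xn] := C3b hm hA hw hA' hw' lt.
    by exists x; split=> //; apply: sub_del HF HG xn.
  subst A'; have [x xp xn] := C3a hm hA hw hw' st.
  by exists x; split=> //; apply: sub_del HF HG xn.
- case=> x [xp HS].
  have [B [v [hB hv sub fG ord]]] := mk_plus hm hA hw xp.
  rewrite eF in HS *.
  have [h1 h2] := sub_del2 HS sub.
  split=> //; exists (path_set B v); split=> //.
  exists A, B, w, v; split=> //; split=> //; first by rewrite -eF.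
  by case: ord => [?|[-> ?]]; [left | right].
Qed.
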